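(* Let $\gamma\in(0,1)$, $t\ge1$, $H\ge1$ integers, and for each integer $i$ with $t/2\le i<t$ let $\bm Q_i\in\mathbb R^{|\mathcal S||\mathcal A|}$ satisfy $\bm0\le\bm Q_i\le\frac1{1-\gamma}\bm1$, with $\bm V_i(s)=\max_a\bm Q_i(s,a)$ and greedy policy $\pi_i(s)\in\arg\max_a\bm Q_i(s,a)$. Let $\Pi$ be the set of deterministic policies $\pi$ such that for every $s\in\mathcal S$, $\pi(s)\in\{\pi_i(s):t/2\le i<t\}$ (the index $i$ may depend on $s$). Then for any policies $\widehat\pi_1,\dots,\widehat\pi_{H}\in\Pi$, $$\sum_{h=0}^{H-1}\gamma^h\Big(\prod_{k=1}^h\bm P^{\widehat\pi_k}\Big)\max_{t/2\le i<t}\mathsf{Var}_{\bm P}(\bm V_i)\le\frac{4}{\gamma^2(1-\gamma)^2}\Big(1+2\max_{t/2\le i<t}\|\bm Q_i-\bm Q^\star\|_\infty\Big)\bm1.$$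
   Context: Discounted MDP with finite $\mathcal S,\mathcal A$, rewards in $[0,1]$, discount $\gamma$, optimal Q-function $\bm Q^\star$. Vector inequalities and $\max$ over vectors are entrywise; $\bm1$ is the all-ones vector. $\bm P\in\mathbb R^{|\mathcal S||\mathcal A|\times|\mathcal S|}$ with $\bm P((s,a),s')=P(s'\mid s,a)$. For a deterministic policy $\pi$, $\bm\Pi^\pi(s,(s,a))=1$ iff $a=\pi(s)$ and $0$ otherwise, and $\bm P^\pi=\bm P\bm\Pi^\pi$. For $\bm V\in\mathbb R^{|\mathcal S|}$, $\mathsf{Var}_{\bm P}(\bm V)=\bm P(\bm V\circ\bm V)-(\bm P\bm V)\circ(\bm P\bm V)$, $\circ$ the entrywise product. Empty products are the identity. *)

(* Defs.v *)
From mathcomp Require Import all_boot all_order all_algebra.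
Set Implicit Arguments. Unset Strict Implicit. Unset Printing Implicit Defensive.
Import Order.TTheory GRing.Theory Num.Theory.
Local Open Scope ring_scope.

Section MDP.
Variables (R : realFieldType) (S A : finType).

(* A transition kernel P((s,a), s') = P(s' | s,a). *)
Definition is_transition (P : S * A -> S -> R) : Prop :=
  (forall sa s', 0 <= P sa s') /\ (forall sa, \sum_(s' : S) P sa s' = 1).

(* V(s) = max_a Q(s,a)  (a0 : A only serves as a seed for the finite max). *)
Definition Vmax (a0 : A) (Q : S * A -> R) (s : S) : R :=
  \big[Num.max/Q (s, a0)]_(a : A) Q (s, a).

Definition PV (P : S * A -> S -> R) (V : S -> R) : S * A -> R :=
  fun sa => \sum_(s' : S) P sa s' * V s'.

(* P^pi = P Pi^pi acting on vectors over S x A: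
   (P^pi x)(s,a) = sum_s' P(s'|s,a) x(s', pi s'). *)
Definition Ppi (P : S * A -> S -> R) (pi : S -> A) (x : S * A -> R) : S * A -> R :=
  fun sa => \sum_(s' : S) P sa s' * x (s', pi s').

(* (prod_{k=1}^h P^{pis k}) x = P^{pis 1} ( ... (P^{pis h} x)); empty product = id *)
Fixpoint prodPpi (P : S * A -> S -> R) (pis : nat -> S -> A) (h : nat)
  (x : S * A -> R) : S * A -> R :=
  match h with
  | O => x
  | h'.+1 => prodPpi P pis h' (Ppi P (pis h'.+1) x)
  end.

Definition VarP (P : S * A -> S -> R) (V : S -> R) : S * A -> R :=
  fun sa => PV P (fun s => V s * V s) sa - PV P V sa * PV P V sa.

(* Q* is the optimal Q-function: the (unique, since 0 <= gamma < 1) fixed point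
   of the Bellman optimality operator  Q |-> r + gamma P (max_a Q). *)
Definition is_optimal_Q (P : S * A -> S -> R) (r : S * A -> R) (gamma : R)
  (a0 : A) (Qstar : S * A -> R) : Prop :=
  forall sa, Qstar sa = r sa + gamma * PV P (Vmax a0 Qstar) sa.

Definition supnorm (x : S * A -> R) : R := \big[Num.max/0]_(sa : S * A) `|x sa|.

End MDP.

(* Main.v *)
Require Import Defs.
From mathcomp Require Import all_boot all_order all_algebra.
Import Order.TTheory GRing.Theory Num.Theory.
Local Open Scope ring_scope.
From mathcomp Require Import all_boot all_order all_algebra ring lra.
Import Order.TTheory GRing.Theory Num.Theory.
Local Open Scope ring_scope.
Section L.
Variables (R : realFieldType) (S A : finType) (P : S * A -> S -> R).
Hypothesis P0 : forall sa s', 0 <= P sa s'.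
Hypothesis P1 : forall sa, \sum_(s' : S) P sa s' = 1.

Lemma Ppi_lin pi a b c x y sa :
  Ppi P pi (fun z => a * x z + b * y z + c) sa = a * Ppi P pi x sa + b * Ppi P pi y sa + c.
Proof.
rewrite /Ppi.
under eq_bigr do rewrite !mulrDr mulrCA [P _ _ * (b * _)]mulrCA.
by rewrite !big_split /= -!mulr_sumr -mulr_suml P1 mul1r.
Qed.

Lemma PV_lin a b c x y sa :
  PV P (fun z => a * x z + b * y z + c) sa = a * PV P x sa + b * PV P y sa + c.
Proof.
rewrite /PV.
under eq_bigr do rewrite !mulrDr mulrCA [P _ _ * (b * _)]mulrCA.
by rewrite !big_split /= -!mulr_sumr -mulr_suml P1 mul1r.
Qed.

Lemma Ppi_le pi x y sa : (forall s, x (s, pi s) <= y (s, pi s)) -> Ppi P pi x sa <= Ppi P pi y sa.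
Proof. move=> h; apply: ler_sum => s _; exact: ler_wpM2l. Qed.

Lemma PV_le x y sa : (forall z, x z <= y z) -> PV P x sa <= PV P y sa.
Proof. move=> h; apply: ler_sum => s _; exact: ler_wpM2l. Qed.

Lemma PV_cst c sa : PV P (fun _ => c) sa = c.
Proof. by rewrite /PV -mulr_suml P1 mul1r. Qed.

Lemma prodPpi_ext pis h x y sa : (forall z, x z = y z) ->
  prodPpi P pis h x sa = prodPpi P pis h y sa.
Proof.
elim: h x y sa => [|h IH] x y sa e /=; first exact: e.
apply: IH => z; rewrite /Ppi; apply: eq_bigr => s _; by rewrite e.
Qed.

Lemma prodPpi_le pis h x y sa : (forall z, x z <= y z) ->
  prodPpi P pis h x sa <= prodPpi P pis h y sa.
Proof.
elim: h x y sa => [|h IH] x y sa e /=; first exact: e.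
apply: IH => z; apply: Ppi_le => s; exact: e.
Qed.

Lemma prodPpi_lin pis h a b c x y sa :
  prodPpi P pis h (fun z => a * x z + b * y z + c) sa
  = a * prodPpi P pis h x sa + b * prodPpi P pis h y sa + c.
Proof.
elim: h x y sa => [|h IH] x y sa //=.
rewrite (@prodPpi_ext _ _ _ (fun z => a * Ppi P (pis h.+1) x z + b * Ppi P (pis h.+1) y z + c)); first exact: IH.
by move=> z; rewrite Ppi_lin.
Qed.

Lemma sq_dev V c sa :
  PV P (fun s => (V s - c) ^+ 2) sa = VarP P V sa + (PV P V sa - c) ^+ 2.
Proof.
have -> : PV P (fun s => (V s - c) ^+ 2) sa =
   PV P (fun s => 1 * (V s * V s) + (-2 * c) * V s + c ^+ 2) sa.
  by apply: eq_bigr => s _; congr (_ * _); ring.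
rewrite PV_lin /VarP; ring.
Qed.

Lemma Var_ge0 V sa : 0 <= VarP P V sa.
Proof.
have := sq_dev V (PV P V sa) sa; rewrite subrr expr0n /= addr0 => <-.
rewrite /PV; apply: sumr_ge0 => s _; apply: mulr_ge0 => //; exact: sqr_ge0.
Qed.
Lemma PV_addc x c sa : PV P (fun z => x z + c) sa = PV P x sa + c.
Proof.
have := @PV_lin 1 0 c x x sa; rewrite mul1r mul0r addr0 => <-.
by apply: eq_bigr => s _; rewrite mul1r mul0r addr0.
Qed.
End L.
Theorem mainTheorem10 (R : realFieldType) (S A : finType) (a0 : A)
  (P : S * A -> S -> R) (r : S * A -> R) (gamma : R) (Qstar : S * A -> R)
  (t H : nat) (Q : nat -> S * A -> R) (pi : nat -> S -> A)
  (hatpi : nat -> S -> A) :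
  is_transition P ->
  (forall sa, 0 <= r sa <= 1) ->
  0 < gamma < 1 ->
  is_optimal_Q P r gamma a0 Qstar ->
  (1 <= t)%N -> (1 <= H)%N ->
  (forall i, (t <= 2 * i)%N -> (i < t)%N ->
     forall sa, 0 <= Q i sa <= 1 / (1 - gamma)) ->
  (forall i, (t <= 2 * i)%N -> (i < t)%N ->
     forall s a, Q i (s, a) <= Q i (s, pi i s)) ->
  (forall k, (1 <= k <= H)%N ->
     forall s, exists i, [/\ (t <= 2 * i)%N, (i < t)%N & hatpi k s = pi i s]) ->
  forall sa : S * A,
    \sum_(h < H) gamma ^+ h *
       prodPpi P hatpi h
         (fun sa' => \big[Num.max/0]_(i < t | (t <= 2 * i)%N)
                        VarP P (Vmax a0 (Q i)) sa') sa
    <= 4 / (gamma ^+ 2 * (1 - gamma) ^+ 2) *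
       (1 + 2 * \big[Num.max/0]_(i < t | (t <= 2 * i)%N)
                    supnorm (fun sa' => Q i sa' - Qstar sa')).
Proof.
move=> [P0 P1] hr /andP[g0 g1] hQs t1 H1 hQb hgr hpi sa.
set M := 1 / (1 - gamma).
have g1' : 0 < 1 - gamma by rewrite subr_gt0.
have M0 : 0 < M by rewrite /M divr_gt0.
have MgE : M * (1 - gamma) = 1 by rewrite /M mul1r mulVf // gt_eqF.
have Vge : forall (Qf : S * A -> R) s a, Qf (s, a) <= Vmax a0 Qf s.
  by move=> Qf s a; rewrite /Vmax; apply: le_bigmax.
have Vle : forall (Qf : S * A -> R) s b, (forall a, Qf (s, a) <= b) -> Vmax a0 Qf s <= b.
  by move=> Qf s b hb; rewrite /Vmax; apply: bigmax_le.
have PVcst_le : forall (V : S -> R) b z, (forall s, V s <= b) -> PV P V z <= b.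
  by move=> V b z hb; rewrite -(@PV_cst _ _ _ P P1 b z); apply: (@PV_le _ _ _ P P0).
have PVcst_ge : forall (V : S -> R) b z, (forall s, b <= V s) -> b <= PV P V z.
  by move=> V b z hb; rewrite -(@PV_cst _ _ _ P P1 b z); apply: (@PV_le _ _ _ P P0).
have QsB : forall z, 0 <= Qstar z <= M.
  set mx := \big[Num.max/Qstar sa]_(z : S * A) Qstar z.
  have hmx : forall z, Qstar z <= mx by move=> z; apply: le_bigmax.
  have hmx2 : mx <= 1 + gamma * mx.
    have hz : forall z, Qstar z <= 1 + gamma * mx.
      move=> z; rewrite hQs; have /andP[_ r1] := hr z.
      have : PV P (Vmax a0 Qstar) z <= mx.
        by apply: PVcst_le => s; apply: Vle => a.
      move=> h; apply: lerD => //; rewrite ler_wpM2l //; exact: ltW.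
    by apply: bigmax_le.
  set mn := \big[Num.min/Qstar sa]_(z : S * A) Qstar z.
  have hmn : forall z, mn <= Qstar z by move=> z; apply: bigmin_le.
  have hmn2 : gamma * mn <= mn.
    have hz : forall z, gamma * mn <= Qstar z.
      move=> z; rewrite hQs; have /andP[r0 _] := hr z.
      have : mn <= PV P (Vmax a0 Qstar) z.
        apply: PVcst_ge => s; apply: le_trans (hmn (s, a0)) _; exact: Vge.
      move=> h; rewrite -(add0r (gamma * mn)); apply: lerD => //; rewrite ler_wpM2l //; exact: ltW.
    by apply: le_bigmin.
  have mn0 : 0 <= mn by nra.
  have mxM : mx <= M by rewrite /M ler_pdivlMr //; nra.
  move=> z; apply/andP; split; [exact: le_trans mn0 (hmn z)| exact: le_trans (hmx z) mxM].
set Vs := Vmax a0 Qstar.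
have VsB : forall s, 0 <= Vs s <= M.
  move=> s; apply/andP; split.
    by apply: le_trans (Vge _ s a0); case/andP: (QsB (s, a0)).
  by apply: Vle => a; case/andP: (QsB (s, a)).
set eps := \big[Num.max/0]_(i < t | (t <= 2 * i)%N) supnorm (fun sa' => Q i sa' - Qstar sa').
have eps0 : 0 <= eps by apply: bigmax_ge_id.
have epsD : forall i, (t <= 2 * i)%N -> (i < t)%N -> forall z, `|Q i z - Qstar z| <= eps.
  move=> i i1 i2 z; apply: le_trans (_ : supnorm (fun sa' => Q i sa' - Qstar sa') <= eps).
    by rewrite /supnorm; apply: (le_bigmax _ (fun sa' => `|Q i sa' - Qstar sa'|) z).
  by rewrite /eps (bigmaxD1 (Ordinal i2)) //= le_max lexx.
have ViB : forall i, (t <= 2 * i)%N -> (i < t)%N -> forall s, 0 <= Vmax a0 (Q i) s <= M.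
  move=> i i1 i2 s; apply/andP; split.
    by apply: le_trans (Vge _ s a0); case/andP: (hQb i i1 i2 (s, a0)).
  by apply: Vle => a; case/andP: (hQb i i1 i2 (s, a)).
have ViC : forall i, (t <= 2 * i)%N -> (i < t)%N -> forall s, `|Vmax a0 (Q i) s - Vs s| <= eps.
  move=> i i1 i2 s; rewrite ler_norml; apply/andP; split.
    suff : Vs s <= Vmax a0 (Q i) s + eps by lra.
    apply: Vle => a.
    have := epsD i i1 i2 (s, a); rewrite ler_norml => /andP[h1 h2].
    have := Vge (Q i) s a; lra.
  suff : Vmax a0 (Q i) s <= Vs s + eps by lra.
  apply: Vle => a.
  have := epsD i i1 i2 (s, a); rewrite ler_norml => /andP[h1 h2].
  have := Vge Qstar s a; rewrite -/Vs; lra.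
have VarB : forall i, (t <= 2 * i)%N -> (i < t)%N -> forall z,
    VarP P (Vmax a0 (Q i)) z <= VarP P Vs z + 2 * eps * M.
  move=> i i1 i2 z; set c := PV P Vs z.
  have e1 := @sq_dev _ _ _ P P1 (Vmax a0 (Q i)) c z.
  have e2 := @sq_dev _ _ _ P P1 Vs c z; rewrite subrr expr0n /= addr0 in e2.
  have cB : 0 <= c <= M.
    apply/andP; split; [apply: PVcst_ge | apply: PVcst_le] => s; by case/andP: (VsB s).
  have h : PV P (fun s => (Vmax a0 (Q i) s - c) ^+ 2) z <= PV P (fun s => (Vs s - c) ^+ 2 + 2 * eps * M) z.
    apply: (@PV_le _ _ _ P P0) => s.
    have := ViC i i1 i2 s; rewrite ler_norml => /andP[h1 h2].
    case/andP: (ViB i i1 i2 s) => h3 h4; case/andP: (VsB s) => h5 h6; case/andP: cB => h7 h8.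
    nra.
  rewrite (@PV_addc _ _ _ P P1) e2 e1 in h.
  have := sqr_ge0 (PV P (Vmax a0 (Q i)) z - c); lra.
set x := fun sa' => \big[Num.max/0]_(i < t | (t <= 2 * i)%N) VarP P (Vmax a0 (Q i)) sa'.
have xB : forall z, x z <= M * M.
  move=> z; apply: bigmax_le; first by apply: mulr_ge0; apply: ltW.
  move=> i i1; rewrite /VarP.
  have : PV P (fun s => Vmax a0 (Q i) s * Vmax a0 (Q i) s) z <= M * M.
    apply: PVcst_le => s; case/andP: (ViB i i1 (ltn_ord i) s) => h1 h2; nra.
  have := sqr_ge0 (PV P (Vmax a0 (Q i)) z); rewrite expr2; lra.
have xV : forall z, x z <= VarP P Vs z + 2 * eps * M.
  move=> z; apply: bigmax_le.
    have := @Var_ge0 _ _ _ P P0 P1 Vs z; have := mulr_ge0 eps0 (ltW M0); lra.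
  move=> i i1; exact: VarB i i1 (ltn_ord i) z.
set f := fun s => Vs s * Vs s.
have key : forall k, (1 <= k <= H)%N -> forall s,
    gamma ^+ 2 * VarP P Vs (s, hatpi k s) <= gamma ^+ 2 * PV P f (s, hatpi k s) - f s + 2 * M * (1 + 2 * eps).
  move=> k hk s; have [i [i1 i2 ->]] := hpi k hk s.
  set a := pi i s.
  have qs := hQs (s, a).
  have := epsD i i1 i2 (s, a); rewrite ler_norml => /andP[e1 e2].
  have hv : Vmax a0 (Q i) s <= Q i (s, a) by apply: Vle => b; exact: hgr.
  have := ViC i i1 i2 s; rewrite ler_norml => /andP[e3 e4].
  set m := PV P Vs (s, a).
  have mB : 0 <= m by apply: PVcst_ge => s'; case/andP: (VsB s').
  case/andP: (hr (s, a)) => r0 r1.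
  case/andP: (VsB s) => v0 v1.
  rewrite /VarP -/m /f.
  have low : Vs s - r (s, a) - 2 * eps <= gamma * m.
    rewrite qs in e2; move: e2; rewrite -/Vs -/m; lra.
  have gm0 : 0 <= gamma * m by apply: mulr_ge0 => //; apply: ltW.
  suff : Vs s * Vs s <= (gamma * m) ^+ 2 + 2 * M * (1 + 2 * eps) by rewrite expr2; lra.
  have [hc|hc] := lerP (Vs s) (r (s, a) + 2 * eps).
    have : Vs s * Vs s <= M * (1 + 2 * eps) by nra.
    have := sqr_ge0 (gamma * m); have := mulr_ge0 (ltW M0) (addr_ge0 ler01 (mulr_ge0 (ler0n _ 2) eps0)); lra.
  have h1 : (Vs s - r (s, a) - 2 * eps) ^+ 2 <= (gamma * m) ^+ 2.
    rewrite !expr2; apply: ler_pM => //; lra.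
  have : Vs s * (r (s, a) + 2 * eps) <= M * (1 + 2 * eps) by nra.
  have := sqr_ge0 (r (s, a) + 2 * eps); rewrite !expr2 in h1 *; nra.
set C' := 2 * M * (1 + 2 * eps) + 2 * eps * M.
have C'0 : 0 <= C'.
  have := mulr_ge0 eps0 (ltW M0); have := mulr_ge0 (ltW M0) eps0; rewrite /C'; nra.
have gg : gamma ^+ 2 <= 1 by rewrite expr2; nra.
have gg0 : 0 <= gamma ^+ 2 by rewrite expr2; nra.
set E := fun n => prodPpi P hatpi n (PV P f) sa.
set G := fun n => prodPpi P hatpi n x sa.
have pconst : forall n (c : R), prodPpi P hatpi n (fun _ => c) sa = c.
  move=> n c; have h := @prodPpi_lin _ _ _ P P1 hatpi n 0 0 c x x sa.
  rewrite !mul0r !add0r in h; rewrite -[in RHS]h.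
  apply: (@prodPpi_ext _ _ _ P) => z; by rewrite !mul0r !add0r.
have EB : forall n, 0 <= E n <= M * M.
  move=> n; apply/andP; split.
    rewrite -(pconst n 0); apply: (@prodPpi_le _ _ _ P P0) => z.
    by apply: PVcst_ge => s'; rewrite /f; case/andP: (VsB s') => h1 h2; nra.
  rewrite -(pconst n (M * M)); apply: (@prodPpi_le _ _ _ P P0) => z.
  by apply: PVcst_le => s'; rewrite /f; case/andP: (VsB s') => h1 h2; nra.
have stepG : forall n, (1 <= n.+1 <= H)%N ->
    gamma ^+ 2 * G n.+1 <= gamma ^+ 2 * E n.+1 - E n + C'.
  move=> n hn; rewrite /G /E /=.
  have L1 := @prodPpi_lin _ _ _ P P1 hatpi n (gamma ^+ 2) 0 0 (Ppi P (hatpi n.+1) x) (Ppi P (hatpi n.+1) x) sa.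
  rewrite mul0r !addr0 in L1; rewrite -L1.
  have L2 := @prodPpi_lin _ _ _ P P1 hatpi n (gamma ^+ 2) (-1) C' (Ppi P (hatpi n.+1) (PV P f)) (PV P f) sa.
  rewrite mulN1r in L2.
  apply: le_trans (_ : _ <= prodPpi P hatpi n (fun z => gamma ^+ 2 * Ppi P (hatpi n.+1) (PV P f) z + -1 * PV P f z + C') sa) _; last by rewrite L2.
  apply: (@prodPpi_le _ _ _ P P0) => z.
  have e1 := @Ppi_lin _ _ _ P P1 (hatpi n.+1) (gamma ^+ 2) 0 0 x x z.
  have e2 := @Ppi_lin _ _ _ P P1 (hatpi n.+1) (gamma ^+ 2) (-1) C' (PV P f) (fun z' => f z'.1) z.
  have e3 : Ppi P (hatpi n.+1) (fun z' => f z'.1) z = PV P f z by [].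
  rewrite e3 in e2; rewrite -e2 mul0r !addr0.
  rewrite mul0r !addr0 in e1; rewrite -e1.
  apply: (@Ppi_le _ _ _ P P0) => s' /=.
  have k1 := key n.+1 hn s'.
  have k2 := xV (s', hatpi n.+1 s').
  have k3 := ler_wpM2l gg0 k2.
  have k4 : gamma ^+ 2 * (2 * eps * M) <= 2 * eps * M.
    have := mulr_ge0 eps0 (ltW M0); nra.
  rewrite /C'; lra.
have inv : forall n, (1 <= n <= H)%N ->
    gamma ^+ 2 * (\sum_(h < n) gamma ^+ h * G h)
    <= gamma ^+ 2 * (M * M) + gamma ^+ n.+1 * E n.-1 + C' * \sum_(h < n) gamma ^+ h.
  elim => [//|n IH] hn.
  case: n IH hn => [_ _|m IH hm].
      rewrite big_ord_recr big_ord0 /= add0r expr0 mul1r.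
    have h4 : 0 <= C' * \sum_(h < 1) gamma ^+ h.
      by apply: mulr_ge0 => //; apply: sumr_ge0 => i _; apply: exprn_ge0; apply: ltW.
    move: h4; have := xB sa; have := EB 0%N; rewrite /G /=.
    move=> /andP[h1 h2] h3 h4.
    have := ler_wpM2l gg0 h3.
    have := mulr_ge0 (exprn_ge0 2 (ltW g0)) h1.
    lra.
  have hm1 : (1 <= m.+1 <= H)%N by move: hm => /andP[_ h]; apply/andP; split => //; apply: ltnW.
  have IH1 := IH hm1.
  have st := stepG m hm1.
  rewrite big_ord_recr [in X in _ <= _ + X]big_ord_recr /=.
  rewrite /= in IH1.
  set g := gamma ^+ m.+1.
  have g0' : 0 <= g by apply: exprn_ge0; apply: ltW.
  have st' := ler_wpM2l g0' st.
  case/andP: (EB m) => em _.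
  have hh := mulr_ge0 (mulr_ge0 g0' em) (ltW g1').
  have ex1 : gamma ^+ m.+2 = gamma * g by rewrite exprS.
  have ex2 : gamma ^+ m.+3 = gamma * (gamma * g) by rewrite exprS ex1.
  rewrite ex2; rewrite ex1 in IH1.
  move: IH1 st' hh; set S0 := \sum_(h < m.+1) gamma ^+ h * G h; set S1 := \sum_(h < m.+1) gamma ^+ h.
  rewrite !expr2 => *; nra.
have inH := inv H (introT andP (conj H1 (leqnn H))).
have gs : (\sum_(h < H) gamma ^+ h) * (1 - gamma) = 1 - gamma ^+ H.
  have := subrX1 gamma H; lra.
have gH : 0 <= gamma ^+ H by apply: exprn_ge0; apply: ltW.
have gH1 : gamma ^+ H.+1 <= 1 by apply: exprn_ile1; apply: ltW.
have gH0 : 0 <= gamma ^+ H.+1 by apply: exprn_ge0; apply: ltW.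
have sM : \sum_(h < H) gamma ^+ h <= M.
  have : (M - \sum_(h < H) gamma ^+ h) * (1 - gamma) >= 0 by nra.
  rewrite pmulr_lge0 // subr_ge0 //.
case/andP: (EB H.-1) => eH0 eH1.
have e4 : 4 / (gamma ^+ 2 * (1 - gamma) ^+ 2) = 4 * (M * M) / gamma ^+ 2.
  have gne : gamma != 0 by rewrite gt_eqF.
  have g1ne : 1 - gamma != 0 by rewrite gt_eqF.
  rewrite /M; field.
  by rewrite gne g1ne.
rewrite e4 mulrAC ler_pdivlMr ?exprn_gt0 //.
have -> : \sum_(h < H) gamma ^+ h * prodPpi P hatpi h x sa = \sum_(h < H) gamma ^+ h * G h by [].
move: inH; set T := \sum_(h < H) gamma ^+ h * G h => inH.
have k1 : gamma ^+ H.+1 * E H.-1 <= M * M by nra.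
have k2 : C' * \sum_(h < H) gamma ^+ h <= C' * M by apply: ler_wpM2l.
have k3 : gamma ^+ 2 * (M * M) <= M * M by nra.
have k4 : C' * M = 2 * (M * M) * (1 + 2 * eps) + 2 * eps * (M * M) by rewrite /C'; ring.
have k5 : 0 <= eps * (M * M) by apply: mulr_ge0 => //; nra.
rewrite mulrC; nra.
Qed.
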